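(* Let $k\ge1$, $1\le m\le d$, let $p,q\in[1,\infty]$ with $1/p+1/q=1$. Let $w\in\Lambda^m_{\mathbb{R}^k}(\mathbb{R}^d)$ have components $w_i=\langle w;\cdot,e_i\rangle\in\Lambda^m(\mathbb{R}^d)$, $i=1,\dots,k$. If $p\in(1,\infty]$ then \[ \max_{1\le i\le k}|w_i|_{\mathrm{com}}\le|w|_{\mathrm{com},p}\le\Big(\sum_{i=1}^k|w_i|_{\mathrm{com}}^q\Big)^{1/q}, \] while $|w|_{\mathrm{com},1}=\max_{1\le i\le k}|w_i|_{\mathrm{com}}$. Let $v\in\Lambda_{m,\mathbb{R}^k}(\mathbb{R}^d)$ have components $v_1,\dots,v_k\in\Lambda_m(\mathbb{R}^d)$. If $1\le p<\infty$ then \[ \Big(\sum_{i=1}^k|v_i|^p\Big)^{1/p}\le\Big(\sum_{i=1}^k|v_i|_{\mathrm{mass}}^p\Big)^{1/p}\le|v|_{\mathrm{mass},p}\le\sum_{i=1}^k|v_i|_{\mathrm{mass}}, \] while for $p=\infty$, \[ \max_{i}|v_i|\le\max_i|v_i|_{\mathrm{mass}}\le|v|_{\mathrm{mass},\infty}\le\sum_{i=1}^k|v_i|_{\mathrm{mass}}. \]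
   Context: $\Lambda^m_{\mathbb{R}^k}(\mathbb{R}^d)$: $(\mathbb{R}^k)^*$-valued $m$-covectors $w=\sum_iw_ie_i^*$; $\Lambda_{m,\mathbb{R}^k}(\mathbb{R}^d)$: $\mathbb{R}^k$-valued $m$-vectors $v=\sum_iv_ie_i$; pairing $\langle w,v\rangle=\sum_i\langle w_i,v_i\rangle$. $|w|_{\mathrm{com},p}:=\sup\{\|(\langle w_1,\tau\rangle,\dots,\langle w_k,\tau\rangle)\|_q:\tau\text{ simple }m\text{-vector},|\tau|\le1\}$, $|v|_{\mathrm{mass},p}:=\sup\{\langle w,v\rangle:|w|_{\mathrm{com},p}\le1\}$, where $\|\cdot\|_q$ is the $\ell^q$-norm on $\mathbb{R}^k$. For classical $\sigma\in\Lambda^m(\mathbb{R}^d)$, $\tau\in\Lambda_m(\mathbb{R}^d)$: $|\sigma|_{\mathrm{com}}=\sup\{\langle\sigma,t\rangle:t\text{ simple},|t|\le1\}$, $|\tau|_{\mathrm{mass}}=\sup\{\langle\sigma,\tau\rangle:|\sigma|_{\mathrm{com}}\le1\}$; $|\cdot|$ is the Euclidean norm. *)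

(* Defs.v *)
From HB Require Import structures.
From mathcomp Require Import all_boot all_order all_algebra.
From mathcomp Require Import all_classical all_reals.
From mathcomp Require Import ereal exp.
Set Implicit Arguments. Unset Strict Implicit. Unset Printing Implicit Defensive.
Import Order.TTheory GRing.Theory Num.Theory.
Local Open Scope ring_scope.
Local Open Scope classical_set_scope.

(* Strictly increasing multi-indices I = (i_1 < ... < i_m), i_j in 'I_d:
   they index the standard basis e_I = e_{i_1} /\ ... /\ e_{i_m} of
   Lambda_m(R^d), and the dual basis e_I^* of Lambda^m(R^d). *)
Definition incr (m d : nat) (I : {ffun 'I_m -> 'I_d}) : bool :=
  [forall i : 'I_m, forall j : 'I_m, (i < j)%N ==> (I i < I j)%N].
Definition mindex (m d : nat) := {I : {ffun 'I_m -> 'I_d} | incr I}.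

(* m-vectors and m-covectors: coordinates in the (dual) standard basis. *)
Definition mvec (R : realType) (m d : nat) := mindex m d -> R.
Definition mcovec (R : realType) (m d : nat) := mindex m d -> R.

Definition pairing (R : realType) m d (s : mcovec R m d) (t : mvec R m d) : R :=
  \sum_(I : mindex m d) s I * t I.

Definition enorm (R : realType) m d (t : mvec R m d) : R :=
  Num.sqrt (\sum_(I : mindex m d) t I ^+ 2).

(* tau is simple: tau = v_1 /\ ... /\ v_m, where v_i is row i of M;
   its e_I-coordinate is the minor det [v_i(I_j)]_{i,j}. *)
Definition simple (R : realType) m d (t : mvec R m d) : Prop :=
  exists M : 'M[R]_(m, d),
    forall I : mindex m d, t I = \det (\matrix_(i < m, j < m) M i (val I j)).

Definition comass (R : realType) m d (s : mcovec R m d) : R :=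
  sup [set pairing s t | t in [set t : mvec R m d | simple t /\ enorm t <= 1]].

Definition mass (R : realType) m d (t : mvec R m d) : R :=
  sup [set pairing s t | s in [set s : mcovec R m d | comass s <= 1]].

Definition lqnorm (R : realType) (k : nat) (q : \bar R) (x : 'I_k -> R) : R :=
  match q with
  | EFin r => (\sum_(i < k) `|x i| `^ r) `^ r^-1
  | _ => \big[Num.max/0]_(i < k) `|x i|
  end.

Definition conjexp (R : realType) (p : \bar R) : \bar R :=
  match p with
  | EFin r => if r == 1 then +oo%E else (r / (r - 1))%:E
  | _ => 1%E
  end.

Definition comass_p (R : realType) k m d (p : \bar R)
    (w : 'I_k -> mcovec R m d) : R :=
  sup [set lqnorm (conjexp p) (fun i => pairing (w i) t)
      | t in [set t : mvec R m d | simple t /\ enorm t <= 1]].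

Definition pairingV (R : realType) k m d (w : 'I_k -> mcovec R m d)
    (v : 'I_k -> mvec R m d) : R :=
  \sum_(i < k) pairing (w i) (v i).

Definition mass_p (R : realType) k m d (p : \bar R)
    (v : 'I_k -> mvec R m d) : R :=
  sup [set pairingV w v
      | w in [set w : 'I_k -> mcovec R m d | comass_p p w <= 1]].

(* Main.v *)
Require Import Defs.
From HB Require Import structures.
From mathcomp Require Import all_boot all_order all_algebra.
From mathcomp Require Import all_classical all_reals.
From mathcomp Require Import ereal exp.
From mathcomp Require Import zify.
From mathcomp.algebra_tactics Require Import ring lra.
Import Order.TTheory GRing.Theory Num.Theory.
Local Open Scope ring_scope.
Local Open Scope classical_set_scope.
Set Implicit Arguments. Unset Strict Implicit.

Lemma incr_ge (m : nat) (f : 'I_m -> 'I_m) :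
  (forall i j : 'I_m, (i < j)%N -> (f i < f j)%N) -> forall i : 'I_m, (i <= f i)%N.
Proof.
move=> hf [n hn]; elim: n hn => [|n IH] hn //=.
have hn' : (n < m)%N by apply: ltnW.
have h1 := IH hn'; have h2 := hf (Ordinal hn') (Ordinal hn) (ltnSn n).
move: h1 h2 => /=; lia.
Qed.

Lemma incr_id (m : nat) (f : 'I_m -> 'I_m) :
  (forall i j : 'I_m, (i < j)%N -> (f i < f j)%N) -> forall i : 'I_m, f i = i.
Proof.
move=> hf i; apply: val_inj => /=; apply/eqP; rewrite eqn_leq incr_ge // andbT.
pose g i := rev_ord (f (rev_ord i)).
have hg : forall i j : 'I_m, (i < j)%N -> (g i < g j)%N.
  move=> a b ab; rewrite /g /=.
  have : (rev_ord b < rev_ord a)%N by rewrite /=; move: (ltn_ord a) (ltn_ord b) ab; lia.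
  move/hf; move: (ltn_ord (f (rev_ord a))) (ltn_ord (f (rev_ord b))); lia.
have := @incr_ge m g hg (rev_ord i); rewrite /g /=.
rewrite rev_ordK; move: (ltn_ord i) (ltn_ord (f i)); lia.
Qed.
Lemma incrP {m d} (I : mindex m d) {i j : 'I_m} : (i < j)%N -> (val I i < val I j)%N.
Proof.
move=> ij; have /forallP/(_ i)/forallP/(_ j)/implyP := valP I; exact.
Qed.

Lemma mindex_eq {m d} (I J : mindex m d) :
  (forall i, exists j, val J i = val I j) -> I = J.
Proof.
move=> h; have [f hf] := choice h.
have finc : forall i j : 'I_m, (i < j)%N -> (f i < f j)%N.
  move=> i j ij; have := incrP J ij; rewrite !hf.
  case: (ltngtP (f i) (f j)) => // [/(incrP I) h1|/val_inj ->]; last by rewrite ltnn.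
  by move=> h'; move: (ltn_trans h1 h'); rewrite ltnn.
have fid := @incr_id m f finc.
apply: val_inj; apply/ffunP => i; by rewrite hf fid.
Qed.

Lemma simple_e {R : realType} {m d} (J : mindex m d) :
  simple (fun I : mindex m d => ((I == J)%:R : R)).
Proof.
exists (\matrix_(i < m, l < d) ((val J i == l)%:R)) => I.
have [->|IJ] := eqVneq I J.
  rewrite (_ : \matrix_(i, j) _ = 1%:M) ?det1 //.
  apply/matrixP => i j; rewrite !mxE.
  have injJ : injective (val J).
    move=> a b h; by case: (ltngtP a b) => [/(incrP J)|/(incrP J)|/val_inj //]; rewrite h ltnn.
  by rewrite (inj_eq injJ).

have [i hi] : exists i, forall j, val J i != val I j.
  apply/not_existsP => hn; move/eqP: IJ; apply; apply/mindex_eq => i.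
  have /existsNP [j /negP/negPn/eqP hj] := hn i; by exists j.
rewrite (expand_det_row _ i) big1 // => j _; by rewrite !mxE (negbTE (hi j)) mul0r.
Qed.
Section S.
Variables (R : realType) (m d : nat).
Hypothesis hm : (0 < m)%N.

Lemma simple0 : simple (fun _ : mindex m d => (0:R)).
Proof.
exists 0 => I.
rewrite (expand_det_row _ (Ordinal hm)) big1 // => j _.
by rewrite !mxE mul0r.
Qed.

Lemma simpleN (t : mvec R m d) : simple t -> simple (fun I => - t I).
Proof.
case=> M hM.
pose i0 := Ordinal hm.
pose dv : 'rV[R]_m := \row_i (if i == i0 then -1 else 1).
exists (diag_mx dv *m M) => I.
have -> : \matrix_(i < m, j < m) (diag_mx dv *m M) i (val I j) = diag_mx dv *m \matrix_(i < m, j < m) M i (val I j).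
  by rewrite !mul_diag_mx; apply/matrixP => i j; rewrite !mxE.
rewrite hM det_mulmx det_diag (bigD1 i0) //= big1 ?mxE ?eqxx.
  by rewrite mulr1 mulN1r.
by move=> i /negbTE hi; rewrite mxE hi.
Qed.
End S.

Section Analytic.
Variables (R : realType) (m d : nat).
Hypothesis hm : (0 < m)%N.
Implicit Types (t : mvec R m d) (s : mcovec R m d).

Definition ball : set (mvec R m d) := [set t : mvec R m d | simple t /\ enorm t <= 1].
Definition sqsum (t : mvec R m d) : R := \sum_I t I ^+ 2.

Lemma sqsum_ge0 t : 0 <= sqsum t.
Proof. by apply: sumr_ge0 => I _; rewrite sqr_ge0. Qed.

Lemma enorm_sq t : enorm t ^+ 2 = sqsum t.
Proof. by rewrite /enorm sqr_sqrtr // sqsum_ge0. Qed.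

Lemma enorm_ge0 t : 0 <= enorm t.
Proof. exact: sqrtr_ge0. Qed.

Lemma ball_sqsum t : ball t -> sqsum t <= 1.
Proof.
case=> _ h; rewrite -enorm_sq; have := enorm_ge0 t => h0.
by rewrite -(expr1n _ 2) ler_pXn2r // nnegrE.
Qed.

Lemma pairing_le_sq (s : mcovec R m d) (t : mvec R m d) :
  pairing s t <= (sqsum s + sqsum t) / 2.
Proof.
rewrite ler_pdivlMr // mulrC /pairing mulr_sumr /sqsum -big_split /=.
apply: ler_sum => I _; have := sqr_ge0 (s I - t I); lra.
Qed.

Lemma ball0 : ball (fun _ => 0).
Proof.
split; first exact: simple0.
rewrite /enorm big1 ?sqrtr0 // => I _; by rewrite expr0n.
Qed.

Lemma ballN t : ball t -> ball (fun I => - t I).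
Proof.
case=> hs he; split; first exact: simpleN.
by rewrite /enorm; under eq_bigr do rewrite sqrrN.
Qed.

Lemma pairingN s t : pairing s (fun I => - t I) = - pairing s t.
Proof. by rewrite /pairing -sumrN; apply: eq_bigr => I _; rewrite mulrN. Qed.

Lemma pairing0 t : pairing (fun _ => 0) t = 0.
Proof. by rewrite /pairing big1 // => I _; rewrite mul0r. Qed.

Lemma pairing0r s : pairing s (fun _ => 0) = 0.
Proof. by rewrite /pairing big1 // => I _; rewrite mulr0. Qed.

Definition CS (s : mcovec R m d) := [set pairing s t | t in ball].

Lemma CS_sup s : has_sup (CS s).
Proof.
split; first by exists (pairing s (fun _ => 0)); exists (fun _ => 0) => //; exact: ball0.
exists ((sqsum s + 1) / 2) => _ [t ht <-].
apply: (le_trans (pairing_le_sq s t)); rewrite ler_pM2r // lerD2l.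
exact: ball_sqsum.
Qed.

Lemma comass_ge s t : ball t -> `|pairing s t| <= comass s.
Proof.
move=> ht; have hs := sup_upper_bound (CS_sup s).
rewrite ler_norml; apply/andP; split.
  rewrite lerNl -pairingN; apply: hs; exists (fun I => - t I) => //; exact: ballN.
by apply: hs; exists t.
Qed.

Lemma comass_le s C : (forall t, ball t -> pairing s t <= C) -> comass s <= C.
Proof.
move=> h; apply: ge_sup; first exact: (CS_sup s).1.
by move=> _ [t ht <-]; apply: h.
Qed.

Lemma comass_ge0 s : 0 <= comass s.
Proof. by have := comass_ge s ball0; rewrite pairing0r normr0. Qed.

Lemma pairing_e s J : pairing s (fun I => (I == J)%:R) = s J.
Proof.
rewrite /pairing (bigD1 J) //= eqxx mulr1 big1 ?addr0 // => I /negbTE ->.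
by rewrite mulr0.
Qed.

Lemma ball_e J : ball (fun I => (I == J)%:R).
Proof.
split; first exact: simple_e.
rewrite /enorm (bigD1 J) //= eqxx big1 ?addr0 ?expr1n ?sqrtr1 // => I /negbTE ->.
by rewrite expr0n.
Qed.

Lemma comass_coord s J : comass s <= 1 -> `|s J| <= 1.
Proof. by move=> h; rewrite -pairing_e; apply: le_trans (comass_ge s (ball_e J)) h. Qed.

Lemma comass0 : comass (fun _ : mindex m d => 0 : R) <= 1.
Proof. by apply: comass_le => t _; rewrite pairing0. Qed.

Definition MS (t : mvec R m d) := [set pairing s t | s in [set s : mcovec R m d | comass s <= 1]].

Lemma MS_sup t : has_sup (MS t).
Proof.
split; first by exists (pairing (fun _ => 0) t); exists (fun _ => 0) => //; exact: comass0.
exists (\sum_I `|t I|) => _ [s hs <-].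
apply: ler_sum => I _; apply: (le_trans (ler_norm _)).
rewrite normrM -{2}(mul1r `|t I|); apply: ler_wpM2r => //.
exact: comass_coord.
Qed.

Lemma mass_ge t s : comass s <= 1 -> pairing s t <= mass t.
Proof. by move=> hs; apply: sup_upper_bound (MS_sup t) _ _; exists s. Qed.

Lemma mass_ge0 t : 0 <= mass t.
Proof. by have := mass_ge t comass0; rewrite pairing0. Qed.

Lemma enorm_le_mass t : enorm t <= mass t.
Proof.
have [e0|en0] := eqVneq (enorm t) 0; first by rewrite e0 mass_ge0.
have ep : 0 < enorm t by rewrite lt0r en0 enorm_ge0.
pose s : mcovec R m d := fun I => t I / enorm t.
have hss : sqsum s = 1.
  rewrite /sqsum; under eq_bigr do rewrite expr_div_n.
  by rewrite -mulr_suml (_ : \sum_i t i ^+ 2 = sqsum t) // -enorm_sq divff // sqrf_eq0.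
have hs : comass s <= 1.
  apply: comass_le => t' ht'; apply: (le_trans (pairing_le_sq s t')).
  rewrite hss; have := ball_sqsum ht'; lra.
suff -> : enorm t = pairing s t by apply: mass_ge.
rewrite /pairing /s; under eq_bigr do rewrite mulrAC -expr2.
rewrite -mulr_suml (_ : \sum_i t i ^+ 2 = sqsum t) // -enorm_sq expr2 mulfK //.
Qed.

End Analytic.

Definition vq {R : realType} (q : \bar R) := forall r : R, q = r%:E -> 0 < r.

Lemma conjexp_vq {R : realType} (p : \bar R) : (1 <= p)%E -> vq (conjexp p).
Proof.
case: p => [r0| |] //=; rewrite ?lee_fin => h r.
  case: eqP => // /eqP hne [<-].
  have h1 : 1 < r0 by rewrite lt_neqAle eq_sym hne h.
  by rewrite divr_gt0 // ?subr_gt0 //; apply: lt_trans h1.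
by case=> <-.
Qed.

Section Lq.
Variables (R : realType) (k : nat).
Implicit Types (x y : 'I_k -> R) (q : \bar R).

Lemma lqnorm_ge0 q x : 0 <= lqnorm q x.
Proof. case: q => [r| |]; rewrite /lqnorm; cbv iota beta; by [rewrite powR_ge0 | rewrite bigmax_ge_id]. Qed.

Lemma lqnorm_mono q x y : vq q -> (forall i, `|x i| <= `|y i|) ->
  lqnorm q x <= lqnorm q y.
Proof.
move=> hq hxy; case: q hq => [r| |] hq; rewrite /lqnorm; cbv iota beta; last 2 first.
- by apply: le_bigmax2 => i _.
- by apply: le_bigmax2 => i _.
have r0 := hq r erefl.
have r0' : 0 <= r by exact: ltW.
apply: ge0_ler_powR; rewrite ?invr_ge0 // ?nnegrE; try by apply: sumr_ge0 => i _; exact: powR_ge0.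
apply: ler_sum => i _; apply: ge0_ler_powR; rewrite // nnegrE //.
Qed.

Lemma lqnorm_ge_i q x i : vq q -> `|x i| <= lqnorm q x.
Proof.
move=> hq; case: q hq => [r| |] hq; rewrite /lqnorm; cbv iota beta; last 2 first.
- exact: le_bigmax.
- exact: le_bigmax.
have r0 := hq r erefl.
have -> : `|x i| = (`|x i| `^ r) `^ r^-1 by rewrite -powRrM mulfV ?gt_eqF // powRr1.
have r0' : 0 <= r by exact: ltW.
apply: ge0_ler_powR; rewrite ?invr_ge0 // ?nnegrE ?powR_ge0 //; try by apply: sumr_ge0 => j _; exact: powR_ge0.
rewrite (bigD1 i) //= lerDl; apply: sumr_ge0 => j _; exact: powR_ge0.
Qed.

Lemma lqnorm0 q : vq q -> lqnorm q (fun _ : 'I_k => 0) = 0.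
Proof.
move=> hq; case: q hq => [r| |] hq; rewrite /lqnorm; cbv iota beta.
- have r0 := hq r erefl.
  rewrite big1 ?powR0 ?invr_eq0 ?gt_eqF // => i _; by rewrite normr0 powR0 ?gt_eqF.
- by apply/le_anti; rewrite bigmax_ge_id andbT; apply: bigmax_le => // i _; rewrite normr0.
- by apply/le_anti; rewrite bigmax_ge_id andbT; apply: bigmax_le => // i _; rewrite normr0.
Qed.

End Lq.

Section Vec.
Variables (R : realType) (k m d : nat).
Hypothesis hm : (0 < m)%N.
Variable (p : \bar R).
Hypothesis hp : (1 <= p)%E.
Implicit Types (w : 'I_k -> mcovec R m d) (v : 'I_k -> mvec R m d).

Let hq : vq (conjexp p) := @conjexp_vq R p hp.

Definition CSp w := [set lqnorm (conjexp p) (fun i => pairing (w i) t) | t in @ball R m d].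

Lemma CSp_sup w : has_sup (CSp w).
Proof.
split; first by exists (lqnorm (conjexp p) (fun i => pairing (w i) (fun _ => 0))); exists (fun _ => 0) => //; exact: (ball0 R d hm).
exists (lqnorm (conjexp p) (fun i => comass (w i))) => _ [t ht <-].
apply: lqnorm_mono => // i; rewrite (ger0_norm (comass_ge0 hm _)); exact: comass_ge.
Qed.

Lemma comass_p_ge w t : @ball R m d t ->
  lqnorm (conjexp p) (fun i => pairing (w i) t) <= comass_p p w.
Proof. by move=> ht; apply: sup_upper_bound (CSp_sup w) _ _; exists t. Qed.

Lemma comass_p_le w C : (forall t, @ball R m d t ->
  lqnorm (conjexp p) (fun i => pairing (w i) t) <= C) -> comass_p p w <= C.
Proof.
move=> h; apply: ge_sup; first exact: (CSp_sup w).1.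
by move=> _ [t ht <-]; apply: h.
Qed.

Lemma comass_p_ge0 w : 0 <= comass_p p w.
Proof. apply: le_trans (comass_p_ge w (ball0 R d hm)); exact: lqnorm_ge0. Qed.

Lemma comass_le_comass_p w i : comass (w i) <= comass_p p w.
Proof.
apply: (comass_le hm) => t ht; apply: le_trans (ler_norm _) _.
apply: le_trans (comass_p_ge w ht).
exact: (lqnorm_ge_i (fun i => pairing (w i) t)).
Qed.

Lemma comass_p0 : comass_p p (fun (_ : 'I_k) (_ : mindex m d) => 0 : R) <= 1.
Proof.
apply: comass_p_le => t _; rewrite (_ : (fun i => _) = fun _ => 0).
  by rewrite lqnorm0.
by apply: funext => i; rewrite pairing0.
Qed.

Definition MSp v := [set pairingV w v | w in [set w : 'I_k -> mcovec R m d | comass_p p w <= 1]].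

Lemma MSp_sup v : has_sup (MSp v).
Proof.
split; first by exists (pairingV (fun _ _ => 0) v); exists (fun _ _ => 0) => //; exact: comass_p0.
exists (\sum_i mass (v i)) => _ [w hw <-].
apply: ler_sum => i _; apply: (mass_ge hm).
exact: le_trans (comass_le_comass_p w i) hw.
Qed.

Lemma mass_p_ge v w : comass_p p w <= 1 -> pairingV w v <= mass_p p v.
Proof. by move=> hw; apply: sup_upper_bound (MSp_sup v) _ _; exists w. Qed.

Lemma mass_p_ge0 v : 0 <= mass_p p v.
Proof.
have := mass_p_ge v comass_p0; rewrite /pairingV big1 // => i _; exact: pairing0.
Qed.

Lemma mass_p_le_sum v : mass_p p v <= \sum_i mass (v i).
Proof.
apply: ge_sup; first exact: (MSp_sup v).1.
move=> _ [w hw <-]; apply: ler_sum => i _; apply: (mass_ge hm).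
exact: le_trans (comass_le_comass_p w i) hw.
Qed.

Lemma holder_lb v (a : 'I_k -> R) : (forall i, 0 <= a i) ->
  lqnorm (conjexp p) a <= 1 -> \sum_i a i * mass (v i) <= mass_p p v.
Proof.
move=> a0 ha; apply/ler_addgt0Pr => e e0.
set A := \sum_i a i.
have A0 : 0 <= A by apply: sumr_ge0.
pose eps := e / (A + 1).
have eps0 : 0 < eps by rewrite divr_gt0 // ltr_wpDl.
have hch : forall i, exists s : mcovec R m d, comass s <= 1 /\ mass (v i) - eps < pairing s (v i).
  move=> i; have [_ [s hs <-] hlt] := sup_adherent eps0 (MS_sup hm (v i)).
  by exists s.
have [s hs] := choice hch.
pose w : 'I_k -> mcovec R m d := fun i I => a i * s i I.
have hw : comass_p p w <= 1.
  apply: comass_p_le => t ht; apply: le_trans ha; apply: lqnorm_mono => // i.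
  rewrite /w /pairing (_ : \sum_I _ = a i * \sum_I s i I * t I).
    rewrite normrM (ger0_norm (a0 i)) -{2}(mulr1 (a i)); apply: ler_wpM2l => //.
    exact: le_trans (comass_ge hm _ ht) (hs i).1.
  by rewrite mulr_sumr; apply: eq_bigr => I _; rewrite mulrA.
have := mass_p_ge v hw.
have -> : pairingV w v = \sum_i a i * pairing (s i) (v i).
  rewrite /pairingV /w /pairing; apply: eq_bigr => i _.
  by rewrite mulr_sumr; apply: eq_bigr => I _; rewrite mulrA.
move=> hle; apply: le_trans _ (lerD hle (lexx e)).
have : \sum_i a i * mass (v i) <= \sum_i a i * pairing (s i) (v i) + eps * A.
  rewrite /A mulr_sumr -big_split /=; apply: ler_sum => i _.
  have := (hs i).2; have := a0 i => h1 h2.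
  nra.
move=> h; apply: le_trans h _; rewrite lerD2l.
have hA1 : 0 < A + 1 by rewrite ltr_wpDl.
rewrite /eps mulrAC ler_pdivrMr //; nra.
Qed.

End Vec.

Lemma lqnorm_EFin (R : realType) k (r : R) (x : 'I_k -> R) : (forall i, 0 <= x i) ->
  lqnorm r%:E x = (\sum_i x i `^ r) `^ r^-1.
Proof. by move=> h; rewrite /lqnorm; congr (_ `^ _); apply: eq_bigr => i _; rewrite ger0_norm. Qed.

Lemma lqnorm_oo (R : realType) k (x : 'I_k -> R) : (forall i, 0 <= x i) ->
  lqnorm +oo%E x = \big[Num.max/0]_i x i.
Proof. by move=> h; rewrite /lqnorm; apply: eq_bigr => i _; rewrite ger0_norm. Qed.

Lemma holder_weights (R : realType) k (r : R) (M : 'I_k -> R) : 1 < r ->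
  (forall i, 0 <= M i) -> 0 < (\sum_i M i `^ r) `^ r^-1 ->
  exists a : 'I_k -> R, [/\ forall i, 0 <= a i,
    lqnorm (r / (r - 1))%:E a <= 1 & (\sum_i M i `^ r) `^ r^-1 = \sum_i a i * M i].
Proof.
move=> r1 M0; set S := \sum_i M i `^ r; set N := S `^ r^-1 => Npos.
have r0 : 0 < r by apply: lt_trans r1.
have S0 : 0 <= S by apply: sumr_ge0 => i _; exact: powR_ge0.
have Sne : S != 0.
  apply/negP => /eqP hS; move: Npos; rewrite /N hS powR0 ?ltxx // invr_eq0 gt_eqF //.
have Sp : 0 < S by rewrite lt_def Sne.
have NrS : N `^ r = S by rewrite -powRrM mulVf ?gt_eqF // powRr1.
have Nne : N != 0 by rewrite gt_eqF.
have hinv : forall y : R, 0 <= y -> (y^-1) `^ r = (y `^ r)^-1.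
  by move=> y y0; rewrite -powR_inv1 // -powRrM mulN1r powRN.
have hx : forall i, (M i / N) `^ r = M i `^ r / S.
  move=> i; rewrite powRM ?invr_ge0 ?(ltW Npos) // hinv ?(ltW Npos) // NrS //.
have hsum : \sum_i (M i / N) `^ r = 1.
  by under eq_bigr do rewrite hx; rewrite -mulr_suml mulfV.
exists (fun i => (M i / N) `^ (r - 1)); split.
- by move=> i; exact: powR_ge0.
- rewrite lqnorm_EFin; last by move=> i; exact: powR_ge0.
  under eq_bigr do rewrite -powRrM (_ : (r - 1) * (r / (r - 1)) = r) ?(mulrC (r - 1)) ?divfK ?subr_eq0 ?gt_eqF //.
  by rewrite hsum powR1.
- have -> : \sum_i (M i / N) `^ (r - 1) * M i = \sum_i N * (M i / N) `^ r.
    apply: eq_bigr => i _.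
    rewrite -{2}(divfK Nne (M i)).
    have e : (M i / N) * (M i / N) `^ (r - 1) = (M i / N) `^ r.
      by apply: mulr_powRB1 => //; apply: divr_ge0 => //; apply: ltW.
    rewrite -e; ring.
  by rewrite -mulr_sumr hsum mulr1.
Qed.

Unset Implicit Arguments.
Unset Strict Implicit.

Theorem lemmaA6 (R : realType) (k m d : nat) (hk : (1 <= k)%N)
  (hm : (1 <= m)%N) (hmd : (m <= d)%N) (p : \bar R) (hp : (1 <= p)%E)
  (w : 'I_k -> mcovec R m d) (v : 'I_k -> mvec R m d) :
  [/\ (1 < p)%E -> forall q : R, conjexp p = q%:E ->
        \big[Num.max/0]_(i < k) comass (w i) <= comass_p p w /\
        comass_p p w <= (\sum_(i < k) comass (w i) `^ q) `^ q^-1,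
      p = 1%E -> comass_p p w = \big[Num.max/0]_(i < k) comass (w i),
      forall r : R, p = r%:E ->
        (\sum_(i < k) enorm (v i) `^ r) `^ r^-1
          <= (\sum_(i < k) mass (v i) `^ r) `^ r^-1 /\
        (\sum_(i < k) mass (v i) `^ r) `^ r^-1 <= mass_p p v /\
        mass_p p v <= \sum_(i < k) mass (v i)
    & p = +oo%E ->
        \big[Num.max/0]_(i < k) enorm (v i)
          <= \big[Num.max/0]_(i < k) mass (v i) /\
        \big[Num.max/0]_(i < k) mass (v i) <= mass_p p v /\
        mass_p p v <= \sum_(i < k) mass (v i)].
Proof.
have hq := conjexp_vq hp.
have cge0 : forall i, 0 <= comass (w i) by move=> i; exact: comass_ge0.
have Mge0 : forall i, 0 <= mass (v i) by move=> i; exact: mass_ge0.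
have Ege0 : forall i, 0 <= enorm (v i) by move=> i; exact: enorm_ge0.
have lbmax : \big[Num.max/0]_(i < k) comass (w i) <= comass_p p w.
  apply: bigmax_le; first exact: comass_p_ge0.
  by move=> i _; exact: comass_le_comass_p.
split.
- move=> _ q hcq; split => //.
  rewrite -lqnorm_EFin // -hcq.
  apply: comass_p_le => // t ht; apply: lqnorm_mono => // i.
  rewrite (ger0_norm (cge0 i)); exact: comass_ge.
- move=> hp1; apply/le_anti; rewrite lbmax andbT.
  have hc : conjexp p = +oo%E by rewrite hp1 /conjexp eqxx.
  rewrite -lqnorm_oo // -hc.
  apply: comass_p_le => // t ht; apply: lqnorm_mono => // i.
  rewrite (ger0_norm (cge0 i)); exact: comass_ge.
- move=> r hpr.
  have r1 : 1 <= r by move: hp; rewrite hpr lee_fin.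
  have r0 : 0 < r by apply: lt_le_trans r1.
  have vr : vq (r%:E) by move=> r' [<-].
  split; [|split].
  + rewrite -!lqnorm_EFin //; apply: lqnorm_mono => // i.
    rewrite !ger0_norm //; exact: enorm_le_mass.
  + have [hr1|hne] := eqVneq r 1.
      subst r; rewrite invr1.
      under eq_bigr do rewrite powRr1 //.
      rewrite powRr1; last by apply: sumr_ge0.
      have -> : \sum_(i < k) mass (v i) = \sum_i (fun _ => 1) i * mass (v i).
        by apply: eq_bigr => i _; rewrite mul1r.
      apply: holder_lb => //.
      rewrite hpr /conjexp eqxx lqnorm_oo //.
      by apply: bigmax_le.
    have r1' : 1 < r by rewrite lt_neqAle eq_sym hne r1.
    have [->|hN] := eqVneq ((\sum_(i < k) mass (v i) `^ r) `^ r^-1) 0.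
      exact: mass_p_ge0.
    have Npos : 0 < (\sum_(i < k) mass (v i) `^ r) `^ r^-1 by rewrite lt_def hN powR_ge0.
    have [a [a0 ha ->]] := holder_weights r1' Mge0 Npos.
    apply: holder_lb => //.
    by rewrite hpr /conjexp (negbTE hne).
  + exact: mass_p_le_sum.
- move=> hpo.
  have hc : conjexp p = 1%E by rewrite hpo.
  split; [|split].
  + rewrite -!lqnorm_oo //; apply: lqnorm_mono => // i.
    rewrite !ger0_norm //; exact: enorm_le_mass.
  + apply: bigmax_le; first exact: mass_p_ge0.
    move=> i _.
    have -> : mass (v i) = \sum_j (fun j => (j == i)%:R) j * mass (v j).
      rewrite (bigD1 i) //= eqxx mul1r big1 ?addr0 // => j /negbTE ->.
      by rewrite mul0r.
    apply: holder_lb => //; try by move=> j; rewrite ler0n.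
    rewrite hc lqnorm_EFin; last by move=> j; rewrite ler0n.
    rewrite invr1 (bigD1 i) //= eqxx big1 ?addr0.
      by rewrite !powRr1.
    by move=> j /negbTE ->; rewrite powR0 // oner_neq0.
  + exact: mass_p_le_sum.
Qed.
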